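(* Let $a>0$. The frame $e=\{e_0,e_1,e_2,e_3,e_4\}$ on $B_a^>$ defined by $e_0=\frac{\partial}{\partial x_0}-\frac{2x_0}{r}\cdot\frac{a^4r_o^2}{1+\beta}\,T$, $e_1=\frac{\partial}{\partial r}+\frac{r^2+x_0^2}{r^2}\cdot\frac{a^4r_o^2}{1+\beta}\,T$, $e_2=r^{-1}\frac{\partial}{\partial\sigma_1}$, $e_3=r^{-1}\frac{\partial}{\partial\sigma_2}$, $e_4=(r\beta)^{-1}\frac{\partial}{\partial\sigma_3}$, where $T=-(r^2+x_0^2)\frac{\partial}{\partial r}-2rx_0\frac{\partial}{\partial x_0}$, is a pointwise $g_a$-orthonormal frame on $B_a^>$ and is of class $C^1$.
   Context: On $\mathbb{R}^5$ use coordinates $x=(x_0,\dots,x_4)$, $r=\sqrt{x_1^2+x_2^2+x_3^2+x_4^2}$, Minkowski metric $g_0=-dx_0^2+\sum_{i=1}^4dx_i^2$. On $\{r>0\}$ define $\sigma_1=\frac{1}{r^2}(-x_2dx_1+x_1dx_2-x_4dx_3+x_3dx_4)$, $\sigma_2=\frac{1}{r^2}(-x_3dx_1+x_4dx_2+x_1dx_3-x_2dx_4)$, $\sigma_3=\frac{1}{r^2}(-x_4dx_1-x_3dx_2+x_2dx_3+x_1dx_4)$, so $g_0=-dx_0^2+dr^2+r^2(\sigma_1^2+\sigma_2^2+\sigma_3^2)$. The vector fields $\frac{\partial}{\partial\sigma_i}$ ($i=1,2,3$) on $\{r>0\}$ are the ones annihilated by $dx_0$ and $dr$ with $\sigma_j(\frac{\partial}{\partial\sigma_i})=\delta_{ij}$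 (the frame dual to $\sigma_1,\sigma_2,\sigma_3$ along the spheres), and $\frac{\partial}{\partial r}$, $\frac{\partial}{\partial x_0}$ are the coordinate fields of the cylindrical coordinates $(x_0,r,\text{point of }S^3)$. Let $L=\{r\le|x_0|\}$, $L_o=\{r=|x_0|\}$; $r_o=0$ on $L$ and $r_o=(r^2-x_0^2)/r$ elsewhere. For $a>0$: $B_a=\{0<r_o<1/a\}$, $\tilde{B}_a=B_a\cup L$, $B_a^>=\tilde{B}_a\setminus\{r=0\}$, $\beta=\sqrt{1-(ar_o)^4}$, $\alpha=(r^2+x_0^2)dr-2x_0r\,dx_0$, and $g_a=g_0-r^2(ar_o)^4\sigma_3^2+a^4(r\beta)^{-2}r_o^2\alpha^2$ on $B_a^>$, $g_a=g_0$ on $\{r=0\}$. Orthonormal means $g_a(e_0,e_0)=-1$, $g_a(e_i,e_i)=1$ for $i\ge1$, $g_a(e_i,e_j)=0$ for $i\ne j$. *)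

(* Defs.v *)
From mathcomp Require Import all_boot all_order all_algebra.
From mathcomp Require Import all_classical all_reals all_analysis.
Set Implicit Arguments. Unset Strict Implicit. Unset Printing Implicit Defensive.
Import Order.TTheory GRing.Theory Num.Theory.
Import numFieldNormedType.Exports.
Local Open Scope classical_set_scope.
Local Open Scope ring_scope.

Section Defs.
Variable R : realType.
Notation V := 'rV[R]_5.

Definition xc (x : V) (i : nat) : R := x ord0 (inord i).

Definition rad (x : V) : R :=
  Num.sqrt (xc x 1 ^+ 2 + xc x 2 ^+ 2 + xc x 3 ^+ 2 + xc x 4 ^+ 2).

Definition Lcone : set V := [set x | rad x <= `|xc x 0|].

Definition r_o (x : V) : R :=
  if rad x <= `|xc x 0| then 0 else (rad x ^+ 2 - xc x 0 ^+ 2) / rad x.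

Definition B_a (a : R) : set V := [set x | 0 < r_o x < a^-1].
Definition Bt_a (a : R) : set V := B_a a `|` Lcone.
Definition Bgt_a (a : R) : set V := Bt_a a `\` [set x | rad x = 0].

Definition beta (a : R) (x : V) : R := Num.sqrt (1 - (a * r_o x) ^+ 4).

(* one-forms at the point x, evaluated on the tangent vector v *)
Definition dx0 (x v : V) : R := xc v 0.
Definition dr (x v : V) : R :=
  (xc x 1 * xc v 1 + xc x 2 * xc v 2 + xc x 3 * xc v 3 + xc x 4 * xc v 4) / rad x.
Definition sigma1 (x v : V) : R :=
  (- xc x 2 * xc v 1 + xc x 1 * xc v 2 - xc x 4 * xc v 3 + xc x 3 * xc v 4) / rad x ^+ 2.
Definition sigma2 (x v : V) : R :=
  (- xc x 3 * xc v 1 + xc x 4 * xc v 2 + xc x 1 * xc v 3 - xc x 2 * xc v 4) / rad x ^+ 2.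
Definition sigma3 (x v : V) : R :=
  (- xc x 4 * xc v 1 - xc x 3 * xc v 2 + xc x 2 * xc v 3 + xc x 1 * xc v 4) / rad x ^+ 2.
Definition alpha (x v : V) : R :=
  (rad x ^+ 2 + xc x 0 ^+ 2) * dr x v - 2 * xc x 0 * rad x * dx0 x v.

Definition g0 (v w : V) : R :=
  - xc v 0 * xc w 0 + xc v 1 * xc w 1 + xc v 2 * xc w 2
  + xc v 3 * xc w 3 + xc v 4 * xc w 4.

Definition g_a (a : R) (x v w : V) : R :=
  if rad x == 0 then g0 v w else
  g0 v w - rad x ^+ 2 * (a * r_o x) ^+ 4 * (sigma3 x v * sigma3 x w)
  + a ^+ 4 * (rad x * beta a x) ^-2 * r_o x ^+ 2 * (alpha x v * alpha x w).

(* The coordinate fields d/dx0, d/dr of the cylindrical coordinates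
   (x0, r, point of S^3) and the fields d/dsigma_i: together they form the
   frame dual to the coframe (dx0, dr, sigma1, sigma2, sigma3) on {r > 0}. *)
Definition dual_frame (Dx0 Dr D1 D2 D3 : V -> V) : Prop :=
  forall x : V, 0 < rad x ->
  let forms := [:: dx0 x; dr x; sigma1 x; sigma2 x; sigma3 x] in
  let fields := [:: Dx0 x; Dr x; D1 x; D2 x; D3 x] in
  forall i j : 'I_5,
    (nth (dx0 x) forms j) (nth (Dx0 x) fields i) = (i == j)%:R.

Definition Tfield (Dx0 Dr : V -> V) (x : V) : V :=
  (- (rad x ^+ 2 + xc x 0 ^+ 2)) *: Dr x - (2 * rad x * xc x 0) *: Dx0 x.

Definition coefT (a : R) (x : V) : R := a ^+ 4 * r_o x ^+ 2 / (1 + beta a x).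

Definition frame (a : R) (Dx0 Dr D1 D2 D3 : V -> V) (k : 'I_5) (x : V) : V :=
  match val k with
  | 0 => Dx0 x - (2 * xc x 0 / rad x * coefT a x) *: Tfield Dx0 Dr x
  | 1 => Dr x + ((rad x ^+ 2 + xc x 0 ^+ 2) / rad x ^+ 2 * coefT a x)
                 *: Tfield Dx0 Dr x
  | 2 => (rad x)^-1 *: D1 x
  | 3 => (rad x)^-1 *: D2 x
  | _ => (rad x * beta a x)^-1 *: D3 x
  end.

Definition orthonormal_at (g : V -> V -> R) (e : 'I_5 -> V) : Prop :=
  forall i j : 'I_5,
    g (e i) (e j) = if i == j then (if val i == 0%N then -1 else 1) else 0.

Definition C1_on (A : set V) (f : V -> V) : Prop :=
  (forall x, A x -> differentiable f x) /\
  (forall (k : 'I_5) x, A x ->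
     {for x, continuous (fun y => 'D_(delta_mx ord0 k : V) f y)}).

End Defs.

(* Main.v *)
Require Import Defs.
From mathcomp Require Import all_boot all_order all_algebra.
From mathcomp Require Import all_classical all_reals all_analysis.
From mathcomp Require Import ring lra.
Import Order.TTheory GRing.Theory Num.Theory.
Import numFieldNormedType.Exports.
Import Defs.
Local Open Scope classical_set_scope.
Local Open Scope ring_scope.
Section C1lib.
Context {R : realType} {V : normedModType R}.

Definition C1 {W : normedModType R} (U : set V) (f : V -> W) :=
  forall y, U y -> differentiable f y /\
    forall v, {for y, continuous (fun z => 'd f z v)}.

Lemma cont_near {T : topologicalType} (U : set V) (F G : V -> T) y :
  open U -> U y -> (forall z, U z -> F z = G z) ->
  {for y, continuous G} -> {for y, continuous F}.
Proof.
move=> oU Uy FG cG.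
have nU : \forall z \near y, U z by apply: open_nbhs_nbhs; split.
rewrite /prop_for /continuous_at (FG y Uy).
apply: cvg_trans cG.
apply: near_eq_cvg; near=> z; rewrite FG //; near: z; exact: nU.
Unshelve. all: by end_near. Qed.

Lemma diff_of {W : normedModType R} (f : V -> W) (df : {linear V -> W}) x :
  continuous df -> f \o shift x = cst (f x) + df +o_ 0 id ->
  differentiable f x.
Proof.
move=> dfc dxf.
have hdf h : (f \o shift x = cst (f x) + h +o_ 0 id) ->
    h = f \o shift x - cst (f x) +o_ 0 id.
  move=> hdf; apply: eqaddoE.
  rewrite hdf addrAC -!addrA addrC !addrA subrK.
  rewrite -[LHS]addr0 -addrA; congr (_ + _).
  by apply/eqP; rewrite eq_sym addrC addr_eq0 oppo.
apply/diffP => /=.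
apply: (@getPex _ (fun (df : {linear V -> W}) => continuous df /\
  forall y, f y = f (lim (nbhs x)) + df (y - lim (nbhs x))
                  +o_(y \near x) (y - lim (nbhs x)))).
exists df; split=> //; apply: eqaddoEx => z.
rewrite (hdf _ dxf) !addrA lim_id // /(_ \o _) /= subrK [f _ + _]addrC addrK.
rewrite -addrA -[LHS]addr0; congr (_ + _).
apply/eqP; rewrite eq_sym addrC addr_eq0 oppox; apply/eqP.
rewrite [in LHS]littleo_center0 (comp_centerK x id).
by rewrite -[- _ in RHS](comp_centerK x).
Qed.

Lemma diff_near0 {W : normedModType R} (h : V -> W) y :
  (\forall z \near y, h z = 0) -> differentiable h y /\ 'd h y = 0 :> (V -> W).
Proof.
move=> h0.
have hy : h y = 0 by exact: nbhs_singleton h0.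
have dc : continuous ('d (cst (0:W)) y) by apply: diff_continuous; exact: differentiable_cst.
have E : h \o shift y = cst (h y) + 'd (cst (0:W)) y +o_ 0 id.
  apply/eqaddoP; rewrite diff_cst => e e0 /=.
  have : \forall z \near 0, h (z + y) = 0.
    rewrite (near_shift y); apply: filterS h0 => z /=.
    by rewrite sub0r -[in X in X -> _](subrK y z) addrC.
  apply: filterS => z hz.
  rewrite !fctE /= hz hy addr0 subrr normr0.
  by rewrite mulr_ge0 // ltW.
split; first exact: diff_of E.
by rewrite (diff_unique dc E) diff_cst.
Unshelve. all: by end_near. Qed.


Lemma C1_ext {W : normedModType R} (U : set V) (f g : V -> W) :
  open U -> (forall z, U z -> f z = g z) -> C1 U g -> C1 U f.
Proof.
move=> oU fg Cg.
have key : forall z, U z -> differentiable f z /\ 'd f z = 'd g z :> (V -> W).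
  move=> z Uz.
  have nU : \forall w \near z, U w by apply: open_nbhs_nbhs; split.
  have [hd hdv] : differentiable (f - g) z /\ 'd (f - g) z = 0 :> (V -> W).
    apply: diff_near0; apply: filterS nU => w Uw.
    by rewrite !fctE fg // subrr.
  have E : f = g + (f - g) by rewrite addrC subrK.
  have dg := (Cg z Uz).1.
  have df : differentiable f z by rewrite E; apply: differentiableD.
  split => //.
  rewrite E diffD // hdv; apply: funext => v /=.
  by have -> : (0 : V -> W) v = 0 by []; rewrite addr0.
move=> y Uy; split; first exact: (key y Uy).1.
move=> v; apply: (@cont_near _ U _ (fun z => 'd g z v)) => //.
  by move=> z Uz; rewrite (key z Uz).2.
exact: (Cg y Uy).2.
Qed.

Lemma C1_add {W : normedModType R} (U : set V) (f g : V -> W) :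
  open U -> C1 U f -> C1 U g -> C1 U (fun z => f z + g z).
Proof.
move=> oU Cf Cg y Uy.
have dfg : forall z, U z -> differentiable (fun z => f z + g z) z.
  by move=> z Uz; apply: (differentiableD (Cf z Uz).1 (Cg z Uz).1).
split; first exact: dfg.
move=> v; apply: (@cont_near _ U _ (fun z => 'd f z v + 'd g z v)) => //.
  by move=> z Uz; rewrite (diffD (Cf z Uz).1 (Cg z Uz).1).
apply: cvgD; [exact: (Cf y Uy).2 | exact: (Cg y Uy).2].
Qed.

Lemma C1_mul (U : set V) (f g : V -> R) :
  open U -> C1 U f -> C1 U g -> C1 U (fun z => f z * g z).
Proof.
move=> oU Cf Cg y Uy.
have dfg : forall z, U z -> differentiable (fun z => f z * g z) z.
  by move=> z Uz; apply: (differentiableM (Cf z Uz).1 (Cg z Uz).1).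
split; first exact: dfg.
move=> v; apply: (@cont_near _ U _ (fun z => f z * 'd g z v + g z * 'd f z v)) => //.
  by move=> z Uz; rewrite (diffM (Cf z Uz).1 (Cg z Uz).1).
apply: cvgD; apply: cvgM.
- exact: differentiable_continuous (Cf y Uy).1.
- exact: (Cg y Uy).2.
- exact: differentiable_continuous (Cg y Uy).1.
- exact: (Cf y Uy).2.
Qed.

Lemma C1_inv (U : set V) (f : V -> R) :
  open U -> (forall z, U z -> f z != 0) -> C1 U f -> C1 U (fun z => (f z)^-1).
Proof.
move=> oU f0 Cf y Uy.
split; first exact: differentiableV (Cf y Uy).1 (f0 y Uy).
move=> v; apply: (@cont_near _ U _ (fun z => - (f z) ^- 2 * 'd f z v)) => //.
  by move=> z Uz; rewrite (diffV (Cf z Uz).1 (f0 z Uz)).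
have cf := differentiable_continuous (Cf y Uy).1.
apply: cvgM; last exact: (Cf y Uy).2.
apply: cvgN; apply: cvgV; first by rewrite expf_neq0 // f0.
exact: cvgM.
Qed.

Lemma C1_comp (U : set V) (f : V -> R) (h dh : R -> R) :
  open U -> (forall z, U z -> is_derive (f z) 1 h (dh (f z)) /\ {for f z, continuous dh}) ->
  C1 U f -> C1 U (fun z => h (f z)).
Proof.
move=> oU hh Cf.
have dhz : forall z, U z -> differentiable h (f z).
  move=> z Uz; apply/derivable1_diffP; have [+ _] := hh z Uz; by case.
have dc : forall z, U z -> differentiable (fun z => h (f z)) z.
  by move=> z Uz; apply: (differentiable_comp (Cf z Uz).1 (dhz z Uz)).
move=> y Uy; split; first exact: dc.
move=> v; apply: (@cont_near _ U _ (fun z => 'd f z v * dh (f z))) => //.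
  move=> z Uz.
  have -> : (fun z => h (f z)) = h \o f by [].
  rewrite (diff_comp (Cf z Uz).1 (dhz z Uz)) /=.
  have [[hd hv] _] := hh z Uz.
  rewrite deriv1E // derive1E hv //.
apply: cvgM; first exact: (Cf y Uy).2.
apply: continuous_comp; first exact: differentiable_continuous (Cf y Uy).1.
exact: (hh y Uy).2.
Qed.

Lemma C1_cst {W : normedModType R} (U : set V) (w : W) : C1 U (fun _ => w).
Proof.
move=> y Uy; split; first exact: differentiable_cst.
move=> v; have -> : (fun z => 'd (fun _ : V => w) z v) = fun _ => 0.
  by apply: funext => z; rewrite (diff_cst w z).
exact: cvg_cst.
Qed.

Lemma C1_lin {W : normedModType R} (U : set V) (f : {linear V -> W}) :
  continuous f -> C1 U f.
Proof.
move=> cf y Uy; split; first exact: linear_differentiable.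
move=> v; have -> : (fun z => 'd f z v) = fun _ => f v.
  by apply: funext => z; rewrite diff_lin.
exact: cvg_cst.
Qed.

Lemma C1_sclc {W : normedModType R} (U : set V) (k : V -> R) (w : W) :
  open U -> C1 U k -> C1 U (fun z => k z *: w).
Proof.
move=> oU Ck y Uy; split; first exact: differentiableZl (Ck y Uy).1.
move=> v; apply: (@cont_near _ U _ (fun z => 'd k z v *: w)) => //.
  by move=> z Uz; rewrite diffZl //; exact: (Ck z Uz).1.
apply: cvgZ; [exact: (Ck y Uy).2 | exact: cvg_cst].
Qed.

Lemma C1_sum {W : normedModType R} (U : set V) n (g : 'I_n -> V -> W) :
  open U -> (forall j, C1 U (g j)) -> C1 U (fun z => \sum_(j < n) g j z).
Proof.
move=> oU; elim: n g => [|n IH] g Cg.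
  have -> : (fun z => \sum_(j < 0) g j z) = fun _ => 0.
    by apply: funext => z; rewrite big_ord0.
  exact: C1_cst.
have -> : (fun z => \sum_(j < n.+1) g j z) =
   fun z => \sum_(j < n) g (widen_ord (leqnSn n) j) z + g ord_max z.
  by apply: funext => z; rewrite big_ord_recr.
apply: C1_add => //.
  exact: (IH (fun j => g (widen_ord (leqnSn n) j))).
Qed.

Lemma C1_rows n (U : set V) (f : V -> 'rV[R]_n) :
  open U -> (forall j, C1 U (fun z => f z ord0 j)) -> C1 U f.
Proof.
move=> oU Cf.
have -> : f = fun z => \sum_(j < n) (fun j z => f z ord0 j *: ('e_j : 'rV[R]_n)) j z.
  by apply: funext => z /=; rewrite [LHS]row_sum_delta.
apply: C1_sum => // j; exact: C1_sclc.
Qed.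

End C1lib.

Section M.
Context {R : realType}.
Definition mf (s : R) := s * (s + `|s|) / 2.
Definition dm (s : R) := s + `|s|.

Lemma dm_cont : continuous dm.
Proof. move=> t; apply: cvgD; [exact: cvg_id | exact: norm_continuous]. Qed.

Lemma mf_derive (t : R) : is_derive t (1:R) mf (dm t).
Proof.
have [tpos|tneg|->] := ltgtP t 0.
- apply: (@near_eq_is_derive _ _ _ (cst 0)).
    near=> s; rewrite /mf ler0_norm ?subrr ?mulr0 ?mul0r //.
    by apply: ltW; near: s; apply: lt_nbhsl.
  by rewrite /dm ltr0_norm // subrr; exact: is_derive_cst.
- apply: (@near_eq_is_derive R R R (fun s : R => s ^+ 2) mf t 1 (dm t)).
    near=> s; rewrite /mf ger0_norm ?expr2.
      by field.
    have : - s < 0 by near: s; apply: Nlt_nbhsl; rewrite oppr_lt0.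
    by rewrite oppr_lt0 => /ltW.
  rewrite /dm gtr0_norm //.
  have <- : 'D_1 (@GRing.exp R ^~ 2) t = t + t.
    by rewrite exp_derive expr1 /GRing.scale /=; lra.
  exact: (derivableP (@exprn_derivable R 2 t 1)).
- have L : (fun h : R => h^-1 *: (mf (h *: 1 + 0) - mf 0)) @ 0^' --> (0:R).
    apply: (@cvg_trans _ ((fun h : R => (h + `|h|) / 2) @ 0^')).
      apply: near_eq_cvg; near=> h.
      have hh : h%:A = h :> R by rewrite /GRing.scale /= mulr1.
      rewrite addr0 hh /mf mul0r mul0r subr0 /GRing.scale /=.
      have hn : h != 0 by near: h; exact: nbhs_dnbhs_neq.
      by field.
    have C : (fun h : R => (h + `|h|) / 2) @ (0:R) --> ((0:R) + `|0:R|) / 2.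
      apply: cvgM; last exact: cvg_cst.
      apply: cvgD; [exact: cvg_id | exact: norm_continuous].
    rewrite normr0 addr0 mul0r in C.
    exact: cvg_within_filter C.
  have -> : dm 0 = 0 by rewrite /dm normr0 addr0.
  apply: DeriveDef; first by apply/cvg_ex; exists 0.
  exact: cvg_lim L.
Unshelve. all: by end_near. Qed.
End M.

Section Alg.
Context {R : realType}.
Notation V := 'rV[R]_5.
Implicit Types (x u w : V).

Lemma xcD u w i : xc (u + w) i = xc u i + xc w i.
Proof. by rewrite /xc mxE. Qed.
Lemma xcZ (c : R) u i : xc (c *: u) i = c * xc u i.
Proof. by rewrite /xc mxE. Qed.

Definition is_form (phi : V -> R) := forall (a b : R) u w,
  phi (a *: u + b *: w) = a * phi u + b * phi w.

Lemma formZ phi a u : is_form phi -> phi (a *: u) = a * phi u.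
Proof.
by move=> H; have := H a 0 u u; rewrite scale0r addr0 mul0r addr0.
Qed.

Lemma form_dx0 x : is_form (dx0 x).
Proof. by move=> a b u w; rewrite /dx0 xcD !xcZ. Qed.
Lemma form_dr x : is_form (dr x).
Proof. by move=> a b u w; rewrite /dr !xcD !xcZ; ring. Qed.
Lemma form_s1 x : is_form (sigma1 x).
Proof. by move=> a b u w; rewrite /sigma1 !xcD !xcZ; ring. Qed.
Lemma form_s2 x : is_form (sigma2 x).
Proof. by move=> a b u w; rewrite /sigma2 !xcD !xcZ; ring. Qed.
Lemma form_s3 x : is_form (sigma3 x).
Proof. by move=> a b u w; rewrite /sigma3 !xcD !xcZ; ring. Qed.

Lemma eq_hu (t L Rr C : R) : t = 1 -> L - Rr = (t - 1) * C -> L = Rr.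
Proof. by move=> -> ; rewrite subrr mul0r => /eqP; rewrite subr_eq0 => /eqP. Qed.

Definition Ssq x := xc x 1 ^+ 2 + xc x 2 ^+ 2 + xc x 3 ^+ 2 + xc x 4 ^+ 2.

Lemma rad2 x : rad x ^+ 2 = Ssq x.
Proof. by rewrite /rad sqr_sqrtr // /Ssq; rewrite !addr_ge0 // sqr_ge0. Qed.

Lemma hu x : 0 < rad x -> (rad x)^-1 ^+ 2 * Ssq x = 1.
Proof. by move=> h; rewrite -rad2 -exprMn mulVf ?expr1n // gt_eqF. Qed.

Lemma g0_coframe x v w : 0 < rad x ->
  g0 v w = - dx0 x v * dx0 x w + dr x v * dr x w
    + rad x ^+ 2 * (sigma1 x v * sigma1 x w + sigma2 x v * sigma2 x w
                   + sigma3 x v * sigma3 x w).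
Proof.
move=> hx; rewrite /g0 /dx0 /dr /sigma1 /sigma2 /sigma3 -!exprVn.
have H := hu x hx; rewrite rad2; move: H.
set u := (rad x)^-1; rewrite /Ssq.
set x1 := xc x 1; set x2 := xc x 2; set x3 := xc x 3; set x4 := xc x 4.
set v0 := xc v 0; set v1 := xc v 1; set v2 := xc v 2; set v3 := xc v 3; set v4 := xc v 4.
set w0 := xc w 0; set w1 := xc w 1; set w2 := xc w 2; set w3 := xc w 3; set w4 := xc w 4.
move=> H; apply: (@eq_hu _ _ _ (- (v1 * w1 + v2 * w2 + v3 * w3 + v4 * w4
  + u ^+ 2 * ((- x2 * v1 + x1 * v2 - x4 * v3 + x3 * v4) * (- x2 * w1 + x1 * w2 - x4 * w3 + x3 * w4)
   + (- x3 * v1 + x4 * v2 + x1 * v3 - x2 * v4) * (- x3 * w1 + x4 * w2 + x1 * w3 - x2 * w4)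
   + (- x4 * v1 - x3 * v2 + x2 * v3 + x1 * v4) * (- x4 * w1 - x3 * w2 + x2 * w3 + x1 * w4)))) H).
ring.
Qed.

Definition mk5 (a0 a1 a2 a3 a4 : R) : V :=
  \row_(j < 5) nth 0 [:: a0; a1; a2; a3; a4] j.
Definition E0 : V := mk5 1 0 0 0 0.
Definition Pv x : V := mk5 0 (xc x 1) (xc x 2) (xc x 3) (xc x 4).
Definition J1v x : V := mk5 0 (- xc x 2) (xc x 1) (- xc x 4) (xc x 3).
Definition J2v x : V := mk5 0 (- xc x 3) (xc x 4) (xc x 1) (- xc x 2).
Definition J3v x : V := mk5 0 (- xc x 4) (- xc x 3) (xc x 2) (xc x 1).

Lemma compE (v : V) (j : 'I_5) : v ord0 j = xc v j.
Proof. by rewrite /xc inord_val. Qed.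

Lemma recon x v : 0 < rad x ->
  v = dx0 x v *: E0 + dr x v *: ((rad x)^-1 *: Pv x) + sigma1 x v *: J1v x
      + sigma2 x v *: J2v x + sigma3 x v *: J3v x.
Proof.
move=> hx; apply/rowP => j; rewrite !mxE compE.
rewrite /dx0 /dr /sigma1 /sigma2 /sigma3 -!exprVn.
have H := hu x hx; move: H; rewrite /Ssq.
set u := (rad x)^-1.
set x1 := xc x 1; set x2 := xc x 2; set x3 := xc x 3; set x4 := xc x 4.
set v0 := xc v 0; set v1 := xc v 1; set v2 := xc v 2; set v3 := xc v 3; set v4 := xc v 4.
move=> H.
case: j => [[|[|[|[|[|j]]]]] hj] //=.
- change (xc v 0) with v0; ring.
- by change (xc v 1) with v1; apply: (@eq_hu _ _ _ (- v1) H); ring.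
- by change (xc v 2) with v2; apply: (@eq_hu _ _ _ (- v2) H); ring.
- by change (xc v 3) with v3; apply: (@eq_hu _ _ _ (- v3) H); ring.
- by change (xc v 4) with v4; apply: (@eq_hu _ _ _ (- v4) H); ring.
Qed.

Definition Gc (r x0 ro b a p0 p1 p2 p3 p4 q0 q1 q2 q3 q4 : R) :=
  - p0 * q0 + p1 * q1 + r ^+ 2 * (p2 * q2 + p3 * q3 + p4 * q4)
  - r ^+ 2 * (a * ro) ^+ 4 * (p4 * q4)
  + a ^+ 4 * (r * b) ^-2 * ro ^+ 2 *
    (((r ^+ 2 + x0 ^+ 2) * p1 - 2 * x0 * r * p0) * ((r ^+ 2 + x0 ^+ 2) * q1 - 2 * x0 * r * q0)).

Definition Hyp (r x0 ro b a : R) :=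
  0 < r /\ 0 < b /\ b ^+ 2 = 1 - (a * ro) ^+ 4 /\
  (ro = 0 \/ (ro = (r ^+ 2 - x0 ^+ 2) / r /\ ro != 0)).

Lemma S00 (r x0 ro b a : R) : Hyp r x0 ro b a ->
  forall k c c1 : R, k = a ^+ 4 * ro ^+ 2 / (1 + b) ->
  c = 2 * x0 / r * k -> c1 = (r ^+ 2 + x0 ^+ 2) / r ^+ 2 * k ->
  Gc r x0 ro b a (1 + c * (2 * r * x0)) (c * (r ^+ 2 + x0 ^+ 2)) 0 0 0 (1 + c * (2 * r * x0)) (c * (r ^+ 2 + x0 ^+ 2)) 0 0 0 = -1.
Proof.
move=> [hr [hb [hb2 [-> | [hro ro0]]]]] k c c1 hk hc hc1; rewrite ?hc1 ?hc hk /Gc.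
  by rewrite !expr0n /= !mulr0 !mul0r; ring.
have r0 : r != 0 by rewrite gt_eqF.
have b0 : b != 0 by rewrite gt_eqF.
have b1 : 1 + b != 0 by rewrite gt_eqF // addr_gt0.
move: hb2; rewrite exprMn => hb2.
have hA : a ^+ 4 = (1 - b ^+ 2) / ro ^+ 4.
  by rewrite hb2 opprB addrC subrK mulfK // expf_neq0.
rewrite hA; move: ro0; rewrite hro => ro0.
have n0 : r ^+ 2 - x0 ^+ 2 != 0 by move: ro0; rewrite mulf_eq0 negb_or => /andP[].
by field; rewrite b1 r0 n0 b0.
Qed.

Lemma S01 (r x0 ro b a : R) : Hyp r x0 ro b a ->
  forall k c c1 : R, k = a ^+ 4 * ro ^+ 2 / (1 + b) ->
  c = 2 * x0 / r * k -> c1 = (r ^+ 2 + x0 ^+ 2) / r ^+ 2 * k ->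
  Gc r x0 ro b a (1 + c * (2 * r * x0)) (c * (r ^+ 2 + x0 ^+ 2)) 0 0 0 (- (c1 * (2 * r * x0))) (1 - c1 * (r ^+ 2 + x0 ^+ 2)) 0 0 0 = 0.
Proof.
move=> [hr [hb [hb2 [-> | [hro ro0]]]]] k c c1 hk hc hc1; rewrite ?hc1 ?hc hk /Gc.
  by rewrite !expr0n /= !mulr0 !mul0r; ring.
have r0 : r != 0 by rewrite gt_eqF.
have b0 : b != 0 by rewrite gt_eqF.
have b1 : 1 + b != 0 by rewrite gt_eqF // addr_gt0.
move: hb2; rewrite exprMn => hb2.
have hA : a ^+ 4 = (1 - b ^+ 2) / ro ^+ 4.
  by rewrite hb2 opprB addrC subrK mulfK // expf_neq0.
rewrite hA; move: ro0; rewrite hro => ro0.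
have n0 : r ^+ 2 - x0 ^+ 2 != 0 by move: ro0; rewrite mulf_eq0 negb_or => /andP[].
by field; rewrite b1 r0 n0 b0.
Qed.

Lemma S10 (r x0 ro b a : R) : Hyp r x0 ro b a ->
  forall k c c1 : R, k = a ^+ 4 * ro ^+ 2 / (1 + b) ->
  c = 2 * x0 / r * k -> c1 = (r ^+ 2 + x0 ^+ 2) / r ^+ 2 * k ->
  Gc r x0 ro b a (- (c1 * (2 * r * x0))) (1 - c1 * (r ^+ 2 + x0 ^+ 2)) 0 0 0 (1 + c * (2 * r * x0)) (c * (r ^+ 2 + x0 ^+ 2)) 0 0 0 = 0.
Proof.
move=> [hr [hb [hb2 [-> | [hro ro0]]]]] k c c1 hk hc hc1; rewrite ?hc1 ?hc hk /Gc.
  by rewrite !expr0n /= !mulr0 !mul0r; ring.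
have r0 : r != 0 by rewrite gt_eqF.
have b0 : b != 0 by rewrite gt_eqF.
have b1 : 1 + b != 0 by rewrite gt_eqF // addr_gt0.
move: hb2; rewrite exprMn => hb2.
have hA : a ^+ 4 = (1 - b ^+ 2) / ro ^+ 4.
  by rewrite hb2 opprB addrC subrK mulfK // expf_neq0.
rewrite hA; move: ro0; rewrite hro => ro0.
have n0 : r ^+ 2 - x0 ^+ 2 != 0 by move: ro0; rewrite mulf_eq0 negb_or => /andP[].
by field; rewrite b1 r0 n0 b0.
Qed.

Lemma S11 (r x0 ro b a : R) : Hyp r x0 ro b a ->
  forall k c c1 : R, k = a ^+ 4 * ro ^+ 2 / (1 + b) ->
  c = 2 * x0 / r * k -> c1 = (r ^+ 2 + x0 ^+ 2) / r ^+ 2 * k ->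
  Gc r x0 ro b a (- (c1 * (2 * r * x0))) (1 - c1 * (r ^+ 2 + x0 ^+ 2)) 0 0 0 (- (c1 * (2 * r * x0))) (1 - c1 * (r ^+ 2 + x0 ^+ 2)) 0 0 0 = 1.
Proof.
move=> [hr [hb [hb2 [-> | [hro ro0]]]]] k c c1 hk hc hc1; rewrite ?hc1 ?hc hk /Gc.
  by rewrite !expr0n /= !mulr0 !mul0r; ring.
have r0 : r != 0 by rewrite gt_eqF.
have b0 : b != 0 by rewrite gt_eqF.
have b1 : 1 + b != 0 by rewrite gt_eqF // addr_gt0.
move: hb2; rewrite exprMn => hb2.
have hA : a ^+ 4 = (1 - b ^+ 2) / ro ^+ 4.
  by rewrite hb2 opprB addrC subrK mulfK // expf_neq0.
rewrite hA; move: ro0; rewrite hro => ro0.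
have n0 : r ^+ 2 - x0 ^+ 2 != 0 by move: ro0; rewrite mulf_eq0 negb_or => /andP[].
by field; rewrite b1 r0 n0 b0.
Qed.

Lemma S22 (r x0 ro b a : R) : Hyp r x0 ro b a ->
  Gc r x0 ro b a 0 0 r^-1 0 0 0 0 r^-1 0 0 = 1
  /\ Gc r x0 ro b a 0 0 0 r^-1 0 0 0 0 r^-1 0 = 1
  /\ Gc r x0 ro b a 0 0 0 0 (r * b)^-1 0 0 0 0 (r * b)^-1 = 1.
Proof.
move=> [hr [hb [hb2 _]]].
have r0 : r != 0 by rewrite gt_eqF.
have b0 : b != 0 by rewrite gt_eqF.
rewrite /Gc; split; first by field; rewrite ?r0 ?b0.
split; first by field; rewrite ?r0 ?b0.
have -> : r ^+ 2 * (a * ro) ^+ 4 = r ^+ 2 * (1 - b ^+ 2) by rewrite hb2 opprB addrC subrK.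
by field; rewrite ?r0 ?b0.
Qed.
Lemma dual25 (Dx0 Dr D1 D2 D3 : V -> V) x :
  dual_frame Dx0 Dr D1 D2 D3 -> 0 < rad x ->
  dx0 x (Dx0 x) = 1 /\
  dr x (Dx0 x) = 0 /\
  sigma1 x (Dx0 x) = 0 /\
  sigma2 x (Dx0 x) = 0 /\
  sigma3 x (Dx0 x) = 0 /\
  dx0 x (Dr x) = 0 /\
  dr x (Dr x) = 1 /\
  sigma1 x (Dr x) = 0 /\
  sigma2 x (Dr x) = 0 /\
  sigma3 x (Dr x) = 0 /\
  dx0 x (D1 x) = 0 /\
  dr x (D1 x) = 0 /\
  sigma1 x (D1 x) = 1 /\
  sigma2 x (D1 x) = 0 /\
  sigma3 x (D1 x) = 0 /\
  dx0 x (D2 x) = 0 /\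
  dr x (D2 x) = 0 /\
  sigma1 x (D2 x) = 0 /\
  sigma2 x (D2 x) = 1 /\
  sigma3 x (D2 x) = 0 /\
  dx0 x (D3 x) = 0 /\
  dr x (D3 x) = 0 /\
  sigma1 x (D3 x) = 0 /\
  sigma2 x (D3 x) = 0 /\
  sigma3 x (D3 x) = 1.
Proof.
move=> hD hx.
split; first exact: (hD x hx (@Ordinal 5 0 erefl) (@Ordinal 5 0 erefl)).
split; first exact: (hD x hx (@Ordinal 5 0 erefl) (@Ordinal 5 1 erefl)).
split; first exact: (hD x hx (@Ordinal 5 0 erefl) (@Ordinal 5 2 erefl)).
split; first exact: (hD x hx (@Ordinal 5 0 erefl) (@Ordinal 5 3 erefl)).
split; first exact: (hD x hx (@Ordinal 5 0 erefl) (@Ordinal 5 4 erefl)).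
split; first exact: (hD x hx (@Ordinal 5 1 erefl) (@Ordinal 5 0 erefl)).
split; first exact: (hD x hx (@Ordinal 5 1 erefl) (@Ordinal 5 1 erefl)).
split; first exact: (hD x hx (@Ordinal 5 1 erefl) (@Ordinal 5 2 erefl)).
split; first exact: (hD x hx (@Ordinal 5 1 erefl) (@Ordinal 5 3 erefl)).
split; first exact: (hD x hx (@Ordinal 5 1 erefl) (@Ordinal 5 4 erefl)).
split; first exact: (hD x hx (@Ordinal 5 2 erefl) (@Ordinal 5 0 erefl)).
split; first exact: (hD x hx (@Ordinal 5 2 erefl) (@Ordinal 5 1 erefl)).
split; first exact: (hD x hx (@Ordinal 5 2 erefl) (@Ordinal 5 2 erefl)).
split; first exact: (hD x hx (@Ordinal 5 2 erefl) (@Ordinal 5 3 erefl)).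
split; first exact: (hD x hx (@Ordinal 5 2 erefl) (@Ordinal 5 4 erefl)).
split; first exact: (hD x hx (@Ordinal 5 3 erefl) (@Ordinal 5 0 erefl)).
split; first exact: (hD x hx (@Ordinal 5 3 erefl) (@Ordinal 5 1 erefl)).
split; first exact: (hD x hx (@Ordinal 5 3 erefl) (@Ordinal 5 2 erefl)).
split; first exact: (hD x hx (@Ordinal 5 3 erefl) (@Ordinal 5 3 erefl)).
split; first exact: (hD x hx (@Ordinal 5 3 erefl) (@Ordinal 5 4 erefl)).
split; first exact: (hD x hx (@Ordinal 5 4 erefl) (@Ordinal 5 0 erefl)).
split; first exact: (hD x hx (@Ordinal 5 4 erefl) (@Ordinal 5 1 erefl)).
split; first exact: (hD x hx (@Ordinal 5 4 erefl) (@Ordinal 5 2 erefl)).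
split; first exact: (hD x hx (@Ordinal 5 4 erefl) (@Ordinal 5 3 erefl)).
exact: (hD x hx (@Ordinal 5 4 erefl) (@Ordinal 5 4 erefl)).
Qed.

Lemma dx0D x (p q : R) u w : dx0 x (p *: u + q *: w) = p * dx0 x u + q * dx0 x w.
Proof. exact: form_dx0. Qed.
Lemma dx0Z x (p : R) u : dx0 x (p *: u) = p * dx0 x u.
Proof. exact: formZ (form_dx0 x). Qed.
Lemma drD x (p q : R) u w : dr x (p *: u + q *: w) = p * dr x u + q * dr x w.
Proof. exact: form_dr. Qed.
Lemma drZ x (p : R) u : dr x (p *: u) = p * dr x u.
Proof. exact: formZ (form_dr x). Qed.
Lemma sigma1D x (p q : R) u w : sigma1 x (p *: u + q *: w) = p * sigma1 x u + q * sigma1 x w.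
Proof. exact: form_s1. Qed.
Lemma sigma1Z x (p : R) u : sigma1 x (p *: u) = p * sigma1 x u.
Proof. exact: formZ (form_s1 x). Qed.
Lemma sigma2D x (p q : R) u w : sigma2 x (p *: u + q *: w) = p * sigma2 x u + q * sigma2 x w.
Proof. exact: form_s2. Qed.
Lemma sigma2Z x (p : R) u : sigma2 x (p *: u) = p * sigma2 x u.
Proof. exact: formZ (form_s2 x). Qed.
Lemma sigma3D x (p q : R) u w : sigma3 x (p *: u + q *: w) = p * sigma3 x u + q * sigma3 x w.
Proof. exact: form_s3. Qed.
Lemma sigma3Z x (p : R) u : sigma3 x (p *: u) = p * sigma3 x u.
Proof. exact: formZ (form_s3 x). Qed.
Section Frame.
Variables (a : R) (Dx0 Dr D1 D2 D3 : V -> V).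
Let fr := frame a Dx0 Dr D1 D2 D3.

Lemma frame0E x (h : (0 < 5)%N) : fr (Ordinal h) x =
  (1 + (2 * xc x 0 / rad x * coefT a x) * (2 * rad x * xc x 0)) *: Dx0 x
  + ((2 * xc x 0 / rad x * coefT a x) * (rad x ^+ 2 + xc x 0 ^+ 2)) *: Dr x.
Proof. by rewrite /fr /frame /Tfield /=; apply/rowP => j; rewrite !mxE; ring. Qed.

Lemma frame1E x (h : (1 < 5)%N) : fr (Ordinal h) x =
  (- ((rad x ^+ 2 + xc x 0 ^+ 2) / rad x ^+ 2 * coefT a x * (2 * rad x * xc x 0))) *: Dx0 x
  + (1 - (rad x ^+ 2 + xc x 0 ^+ 2) / rad x ^+ 2 * coefT a x * (rad x ^+ 2 + xc x 0 ^+ 2)) *: Dr x.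
Proof. by rewrite /fr /frame /Tfield /=; apply/rowP => j; rewrite !mxE; ring. Qed.

Definition Gx x v w := Gc (rad x) (xc x 0) (r_o x) (beta a x) a
  (dx0 x v) (dr x v) (sigma1 x v) (sigma2 x v) (sigma3 x v)
  (dx0 x w) (dr x w) (sigma1 x w) (sigma2 x w) (sigma3 x w).

Lemma ga_cf x v w : 0 < rad x -> g_a a x v w = Gx x v w.
Proof.
move=> hx; rewrite /g_a gt_eqF // (g0_coframe x v w hx) /Gx /Gc /alpha; ring.
Qed.


Lemma rad_ge0 x : 0 <= rad x.
Proof. exact: sqrtr_ge0. Qed.

Lemma HypB x : 0 < a -> Bgt_a a x ->
  0 < rad x /\ Hyp (rad x) (xc x 0) (r_o x) (beta a x) a.
Proof.
move=> ha [hB hr].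
have hx : 0 < rad x by rewrite lt0r rad_ge0 andbT; apply/eqP.
split => //.
have hro : r_o x = 0 \/ (r_o x = (rad x ^+ 2 - xc x 0 ^+ 2) / rad x /\ 0 < r_o x /\ r_o x < a^-1).
  rewrite /r_o; case: ifPn => hL; first by left.
  right; have hL2 := hL; rewrite -ltNge in hL2.
  have pos : 0 < (rad x ^+ 2 - xc x 0 ^+ 2) / rad x.
    rewrite divr_gt0 // subr_gt0 -real_normK ?num_real //.
    by rewrite ltr_pXn2r // ?nnegrE ?normr_ge0 ?rad_ge0.
  split => //; split => //.
  case: hB => /= [/andP[_]|].
    by rewrite /r_o (negPf hL).
  by rewrite /Lcone /= => hc; move: hL; rewrite hc.
have h4 : (a * r_o x) ^+ 4 < 1.
  case: hro => [->|[_ [p1 p2]]]; first by rewrite mulr0 expr0n.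
  rewrite exprn_ilt1 // ?mulr_ge0 ?ltW //.
  by rewrite -(@mulfV _ a) ?gt_eqF // ltr_pM2l.
have hpos : 0 < 1 - (a * r_o x) ^+ 4 by rewrite subr_gt0.
split; first by [].
split; first by rewrite /beta sqrtr_gt0.
split; first by rewrite /beta sqr_sqrtr // ltW.
case: hro => [->|[p1 [p2 _]]]; first by left.
by right; split => //; rewrite gt_eqF.
Qed.

Lemma frame_ortho x : dual_frame Dx0 Dr D1 D2 D3 -> 0 < a -> Bgt_a a x ->
  orthonormal_at (g_a a x) (fun k => fr k x).
Proof.
move=> hD ha hB; have [hx HS] := HypB x ha hB.
have [d00 [d01 [d02 [d03 [d04 [d10 [d11 [d12 [d13 [d14 [d20 [d21 [d22 [d23 [d24
  [d30 [d31 [d32 [d33 [d34 [d40 [d41 [d42 [d43 d44]]]]]]]]]]]]]]]]]]]]]]]] :=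
  @dual25 Dx0 Dr D1 D2 D3 x hD hx.
move=> i j; rewrite ga_cf //.
case: i => [[|[|[|[|[|i]]]]] hi] //; case: j => [[|[|[|[|[|j]]]]] hj] //=;
  rewrite ?frame0E ?frame1E /fr /frame /= /Gx
    ?dx0D ?drD ?sigma1D ?sigma2D ?sigma3D ?dx0Z ?drZ ?sigma1Z ?sigma2Z ?sigma3Z
    ?d00 ?d01 ?d02 ?d03 ?d04 ?d10 ?d11 ?d12 ?d13 ?d14 ?d20 ?d21 ?d22 ?d23 ?d24
    ?d30 ?d31 ?d32 ?d33 ?d34 ?d40 ?d41 ?d42 ?d43 ?d44;
  try (by rewrite /Gc; ring).
- by apply: (eq_trans _ (@S00 _ _ _ _ _ HS _ _ _ erefl erefl erefl)); rewrite /coefT /Gc; ring.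
- by apply: (eq_trans _ (@S01 _ _ _ _ _ HS _ _ _ erefl erefl erefl)); rewrite /coefT /Gc; ring.
- by apply: (eq_trans _ (@S10 _ _ _ _ _ HS _ _ _ erefl erefl erefl)); rewrite /coefT /Gc; ring.
- by apply: (eq_trans _ (@S11 _ _ _ _ _ HS _ _ _ erefl erefl erefl)); rewrite /coefT /Gc; ring.
- by have [e _] := @S22 _ _ _ _ _ HS; apply: (eq_trans _ e); rewrite /Gc; ring.
- by have [_ [e _]] := @S22 _ _ _ _ _ HS; apply: (eq_trans _ e); rewrite /Gc; ring.
- by have [_ [_ e]] := @S22 _ _ _ _ _ HS; apply: (eq_trans _ e); rewrite /Gc; ring.
Qed.
End Frame.
End Alg.

Section C1lib2.
Context {R : realType} {V : normedModType R}.

Lemma C1_opp (U : set V) (f : V -> R) :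
  open U -> C1 U f -> C1 U (fun z => - f z).
Proof.
move=> oU Cf y Uy; split; first exact: differentiableN (Cf y Uy).1.
move=> v; apply: (@cont_near _ _ _ U _ (fun z => - 'd f z v)) => //.
  by move=> z Uz; rewrite diffN //; exact: (Cf z Uz).1.
apply: cvgN; exact: ((Cf y Uy).2 v).
Qed.

Lemma C1_expn (U : set V) (f : V -> R) n :
  open U -> C1 U f -> C1 U (fun z => f z ^+ n).
Proof.
move=> oU Cf; elim: n => [|n IH].
  have -> : (fun z => f z ^+ 0) = fun _ => 1 by apply: funext => z; rewrite expr0.
  by apply: C1_cst.
have -> : (fun z => f z ^+ n.+1) = fun z => f z * f z ^+ n by apply: funext => z; rewrite exprS.
exact: C1_mul.
Qed.

Lemma open_pos (f : V -> R) : C1 setT f -> open [set z | 0 < f z].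
Proof.
move=> Cf.
have -> : [set z | 0 < f z] = f @^-1` [set t | 0 < t] by [].
apply: open_comp; last exact: open_gt.
move=> z _; exact: differentiable_continuous (Cf z I).1.
Qed.

Lemma C1_on_of {W : normedModType R} (U A : set V) (f : V -> W) :
  open U -> A `<=` U -> C1 U f ->
  (forall x, A x -> differentiable f x) /\
  (forall v x, A x -> {for x, continuous (fun y => 'D_v f y)}).
Proof.
move=> oU AU Cf; split; first by move=> x Ax; exact: (Cf x (AU x Ax)).1.
move=> v x Ax; apply: (@cont_near _ _ _ U _ (fun y => 'd f y v)) => //.
- exact: AU.
- by move=> z Uz; rewrite deriveE //; exact: (Cf z Uz).1.
- exact: (Cf x (AU x Ax)).2.
Qed.

End C1lib2.

Section C1main.
Context {R : realType}.
Notation V := 'rV[R]_5.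

Lemma C1_xc (U : set V) i : C1 U (fun z : V => xc z i).
Proof.
have @f : {linear V -> R}.
  by exists (fun N : V => N ord0 (inord i)); do 2![eexists]; do ?[constructor];
     rewrite ?mxE// => ? *; rewrite ?mxE//; move=> ?; rewrite !mxE.
rewrite (_ : (fun _ => _) = f) //; apply: C1_lin; exact: coord_continuous.
Qed.


Lemma C1_Ssq (U : set V) : open U -> C1 U (@Ssq R).
Proof.
move=> oU; rewrite /Ssq.
by repeat apply: C1_add => //; apply: C1_expn => //; exact: C1_xc.
Qed.

Definition sf (z : V) := Ssq z - xc z 0 ^+ 2.

Lemma C1_sf (U : set V) : open U -> C1 U sf.
Proof.
move=> oU; rewrite /sf; apply: C1_add => //; first exact: C1_Ssq.
by apply: C1_opp => //; apply: C1_expn => //; exact: C1_xc.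
Qed.

Lemma C1_mfsf (U : set V) : open U -> C1 U (fun z => mf (sf z)).
Proof.
move=> oU; apply: (@C1_comp _ _ U sf mf dm) => //; last exact: C1_sf.
move=> z _; split; [exact: mf_derive | exact: dm_cont].
Qed.

Variable a : R.

Definition Uset : set V := [set z | 0 < Ssq z /\ a ^+ 2 * mf (sf z) < Ssq z].

Lemma open_Uset : open Uset.
Proof.
have -> : Uset = [set z | 0 < Ssq z] `&` [set z | 0 < Ssq z - a ^+ 2 * mf (sf z)].
  by apply/seteqP; split => z /= [h1 h2]; split => //; rewrite ?subr_gt0 // -subr_gt0.
apply: openI; apply: open_pos; first exact: C1_Ssq openT.
apply: C1_add; first exact: openT.
  exact: C1_Ssq openT.
apply: C1_opp; first exact: openT.
apply: C1_mul; first exact: openT.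
  exact: C1_cst.
exact: C1_mfsf openT.
Qed.


Lemma mf_ge0 (s : R) : 0 <= mf s.
Proof.
rewrite /mf; have [s0|s0] := leP 0 s.
  by rewrite ger0_norm // divr_ge0 // mulr_ge0 // addr_ge0.
by rewrite ltr0_norm // subrr mulr0 mul0r.
Qed.

Lemma mf_neg (s : R) : s <= 0 -> mf s = 0.
Proof. by move=> s0; rewrite /mf ler0_norm // subrr mulr0 mul0r. Qed.

Lemma mf_pos (s : R) : 0 <= s -> mf s = s ^+ 2.
Proof. by move=> s0; rewrite /mf ger0_norm //; field. Qed.

Definition Pf (z : V) := mf (sf z) / Ssq z.

Lemma U_rad {z} : Uset z -> 0 < rad z.
Proof. by move=> [h _]; rewrite /rad sqrtr_gt0. Qed.

Lemma ro2_gen {z} : 0 < rad z -> r_o z ^+ 2 = Pf z.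
Proof.
move=> hr; have r2 := rad2 z.
rewrite /r_o /Pf /sf -r2; case: ifPn => hL.
  rewrite mf_neg ?expr0n ?mul0r // subr_le0 -[xc z 0 ^+ 2]real_normK ?num_real //.
  by rewrite ler_pXn2r // ?nnegrE ?normr_ge0 ?rad_ge0.
rewrite -ltNge in hL.
rewrite mf_pos; last first.
  rewrite subr_ge0 -[xc z 0 ^+ 2]real_normK ?num_real //.
  by rewrite ler_pXn2r // ?nnegrE ?normr_ge0 ?rad_ge0 // ltW.
by field; rewrite gt_eqF.
Qed.

Lemma U_ro2 {z} : Uset z -> r_o z ^+ 2 = Pf z.
Proof. by move=> Uz; apply: ro2_gen; exact: U_rad Uz. Qed.

Lemma U_P {z} : Uset z -> 0 <= Pf z /\ a ^+ 2 * Pf z < 1.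
Proof.
move=> Uz; have [h1 h2] := Uz.
split; first by rewrite /Pf divr_ge0 // ?mf_ge0 // ltW.
by rewrite /Pf mulrA ltr_pdivrMr // mul1r.
Qed.

Lemma U_arg {z} : Uset z -> 0 < 1 - a ^+ 4 * Pf z ^+ 2.
Proof.
move=> Uz; have [p0 p1] := U_P Uz.
have -> : a ^+ 4 * Pf z ^+ 2 = (a ^+ 2 * Pf z) ^+ 2 by ring.
rewrite subr_gt0 exprn_ilt1 //.
by rewrite mulr_ge0 // sqr_ge0.
Qed.

Lemma U_beta {z} : Uset z -> beta a z = Num.sqrt (1 - a ^+ 4 * Pf z ^+ 2).
Proof.
move=> Uz; rewrite /beta -(U_ro2 Uz); congr (Num.sqrt (1 - _)); ring.
Qed.

Lemma C1_rad (U : set V) : open U -> U `<=` Uset -> C1 U (@rad R).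
Proof.
move=> oU sU.
apply: (@C1_comp _ _ U Ssq Num.sqrt (fun t => (2 * Num.sqrt t)^-1)) => //; last exact: C1_Ssq.
move=> z Uz; have [h _] := sU z Uz; split; first exact: is_derive1_sqrt.
apply: cvgV; first by rewrite mulf_neq0 // gt_eqF // sqrtr_gt0.
apply: cvgM; first exact: cvg_cst.
exact: sqrt_continuous.
Qed.

Lemma C1_Pf (U : set V) : open U -> U `<=` Uset -> C1 U Pf.
Proof.
move=> oU sU; rewrite /Pf; apply: C1_mul => //; first exact: C1_mfsf.
apply: C1_inv => //; last exact: C1_Ssq.
by move=> z Uz; have [h _] := sU z Uz; rewrite gt_eqF.
Qed.

Lemma C1_sqrtarg (U : set V) : open U -> U `<=` Uset ->
  C1 U (fun z => Num.sqrt (1 - a ^+ 4 * Pf z ^+ 2)).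
Proof.
move=> oU sU.
apply: (@C1_comp _ _ U (fun z => 1 - a ^+ 4 * Pf z ^+ 2) Num.sqrt
   (fun t => (2 * Num.sqrt t)^-1)) => //.
  move=> z Uz; have h := U_arg (sU z Uz); split; first exact: is_derive1_sqrt.
  apply: cvgV; first by rewrite mulf_neq0 // gt_eqF // sqrtr_gt0.
  apply: cvgM; first exact: cvg_cst.
  exact: sqrt_continuous.
apply: C1_add => //; first exact: C1_cst.
apply: C1_opp => //; apply: C1_mul => //; first exact: C1_cst.
apply: C1_expn => //; exact: C1_Pf.
Qed.

Lemma C1_beta (U : set V) : open U -> U `<=` Uset -> C1 U (beta a).
Proof.
move=> oU sU; apply: (@C1_ext _ _ _ U _ (fun z => Num.sqrt (1 - a ^+ 4 * Pf z ^+ 2))) => //.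
  by move=> z Uz; rewrite U_beta //; exact: sU.
exact: C1_sqrtarg.
Qed.

Lemma C1_coefT (U : set V) : open U -> U `<=` Uset -> C1 U (coefT a).
Proof.
move=> oU sU.
apply: (@C1_ext _ _ _ U _ (fun z => a ^+ 4 * Pf z * (1 + beta a z)^-1)) => //.
  by move=> z Uz; rewrite /coefT (U_ro2 (sU z Uz)).
apply: C1_mul => //.
  apply: C1_mul => //; [exact: C1_cst | exact: C1_Pf].
apply: C1_inv => //.
  by move=> z Uz; rewrite gt_eqF // ltr_wpDr // /beta sqrtr_ge0.
apply: C1_add => //; [exact: C1_cst | exact: C1_beta].
Qed.


Lemma C1_pt (U : set V) (f g : V -> R) : (forall z, f z = g z) -> C1 U g -> C1 U f.
Proof. by move=> fg; rewrite (_ : f = g) //; apply: funext. Qed.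

Definition Fk (k : 'I_5) :=
  frame a (fun _ => E0) (fun z => (rad z)^-1 *: Pv z) J1v J2v J3v k.

Ltac c1step := match goal with
 | |- open _ => assumption
 | |- _ `<=` _ => assumption
 | |- C1 _ (fun _ => ?c) => apply: C1_cst
 | |- C1 _ (fun z => xc z ?i) => apply: C1_xc
 | |- C1 _ (fun z => rad z) => apply: C1_rad
 | |- C1 _ (fun z => coefT a z) => apply: C1_coefT
 | |- C1 _ (fun z => beta a z) => apply: C1_beta
 | |- C1 _ (fun z => @?A z + @?B z) => apply: (@C1_add _ _ _ _ A B)
 | |- C1 _ (fun z => - @?A z) => apply: (@C1_opp _ _ _ A)
 | |- C1 _ (fun z => @?A z * @?B z) => apply: (@C1_mul _ _ _ A B)
 | |- C1 _ (fun z => @?A z ^+ ?n) => apply: (@C1_expn _ _ _ A)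
 | |- C1 _ (fun z => (@?A z)^-1) => apply: (@C1_inv _ _ _ A)
 end.


Lemma C1_F k : C1 Uset (Fk k).
Proof.
have oU := open_Uset; have sU : Uset `<=` Uset by [].
apply: C1_rows => // j.
case: k => [[|[|[|[|[|k]]]]] hk] //; case: j => [[|[|[|[|[|j]]]]] hj] //;
  (eapply C1_pt; [move=> z; rewrite /Fk /frame /Tfield /= !mxE /=; reflexivity|]);
  repeat c1step.
all: move=> z Uz; have hr := U_rad Uz.
all: have hb : 0 < beta a z by rewrite (U_beta Uz) sqrtr_gt0 (U_arg Uz).
all: by rewrite ?mulf_neq0 ?expf_neq0 ?gt_eqF.
Qed.

Lemma frame_F (Dx0 Dr D1 D2 D3 : V -> V) k z : dual_frame Dx0 Dr D1 D2 D3 -> 0 < rad z ->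
  frame a Dx0 Dr D1 D2 D3 k z = Fk k z.
Proof.
move=> hD hz.
have [d00 [d01 [d02 [d03 [d04 [d10 [d11 [d12 [d13 [d14 [d20 [d21 [d22 [d23 [d24
  [d30 [d31 [d32 [d33 [d34 [d40 [d41 [d42 [d43 d44]]]]]]]]]]]]]]]]]]]]]]]] :=
  @dual25 _ Dx0 Dr D1 D2 D3 z hD hz.
have e0 : Dx0 z = E0.
  by rewrite (recon z (Dx0 z) hz) d00 d01 d02 d03 d04 !scale0r !addr0 scale1r.
have e1 : Dr z = (rad z)^-1 *: Pv z.
  by rewrite (recon z (Dr z) hz) d10 d11 d12 d13 d14 !scale0r !addr0 add0r scale1r.
have e2 : D1 z = J1v z.
  by rewrite (recon z (D1 z) hz) d20 d21 d22 d23 d24 !scale0r !addr0 !add0r scale1r.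
have e3 : D2 z = J2v z.
  by rewrite (recon z (D2 z) hz) d30 d31 d32 d33 d34 !scale0r !addr0 !add0r scale1r.
have e4 : D3 z = J3v z.
  by rewrite (recon z (D3 z) hz) d40 d41 d42 d43 d44 !scale0r !add0r scale1r.
by rewrite /Fk /frame /Tfield e0 e1 e2 e3 e4.
Qed.

End C1main.

Lemma Bgt_sub (R : realType) (a : R) : 0 < a -> Bgt_a a `<=` Uset a.
Proof.
move=> ha x hB.
have [hx [_ [hb [hb2 _]]]] := @HypB _ a x ha hB.
have r2 := rad2 x.
split; first by rewrite -r2 exprn_gt0.
have hP := ro2_gen hx.
have -> : mf (sf x) = r_o x ^+ 2 * Ssq x.
  by rewrite hP /Pf mulfVK // -r2 expf_neq0 // gt_eqF.
have h4 : 0 < 1 - (a * r_o x) ^+ 4 by rewrite -hb2 exprn_gt0.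
have t0 : 0 <= (a * r_o x) ^+ 2 by rewrite sqr_ge0.
have t1 : (a * r_o x) ^+ 2 < 1.
  have e : (a * r_o x) ^+ 4 = ((a * r_o x) ^+ 2) * ((a * r_o x) ^+ 2) by ring.
  move: h4 t0; rewrite e; set t := (a * r_o x) ^+ 2 => h4 t0; nra.
have hS : 0 < Ssq x by rewrite -r2 exprn_gt0.
have -> : a ^+ 2 * (r_o x ^+ 2 * Ssq x) = (a * r_o x) ^+ 2 * Ssq x by ring.
by rewrite gtr_pMl.
Qed.

Theorem lemma1 (R : realType) (a : R) (Dx0 Dr D1 D2 D3 : 'rV[R]_5 -> 'rV[R]_5) :
  0 < a ->
  dual_frame Dx0 Dr D1 D2 D3 ->
  (forall x : 'rV[R]_5, Bgt_a a x ->
     orthonormal_at (g_a a x) (fun k => frame a Dx0 Dr D1 D2 D3 k x)) /\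
  (forall k : 'I_5, C1_on (Bgt_a a) (frame a Dx0 Dr D1 D2 D3 k)).
Proof.
move=> ha hD; split.
  move=> x hB; exact (@frame_ortho _ a Dx0 Dr D1 D2 D3 x hD ha hB).
move=> k.
have oU := open_Uset a.
have C : C1 (Uset a) (frame a Dx0 Dr D1 D2 D3 k).
  apply: (@C1_ext _ _ _ (Uset a) _ (Fk a k) oU); last exact: C1_F.
  by move=> z Uz; apply: frame_F => //; exact: U_rad Uz.
have [h1 h2] := C1_on_of (Uset a) (Bgt_a a) _ oU (@Bgt_sub R a ha) C.
split => // j x Ax; exact: h2.
Qed.
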